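(* Assume $\lfloor (M_1+\dots+M_n)/p\rfloor=n-1$ (ample reduction). For $l=1,\dots,n-1$ let $i(l)$ be the unique positive integer with $0\le\sum_{j=i(l)}^nM_j-lp<M_{i(l)}$. Then $i(l)=n-l$ for $l=1,\dots,n-1$.
   Context: $p,q$ are primes, $n$ a positive integer with $p>n\ge2$, $p>q$; $m_1,\dots,m_n$ are positive integers $<q$, and $M_i$ is the least positive integer with $M_i\equiv -m_iq^{-1}\pmod p$ (so $1\le M_i\le p-1$). *)

(* Defs.v *)
From mathcomp Require Import all_boot all_order all_algebra.
Set Implicit Arguments. Unset Strict Implicit. Unset Printing Implicit Defensive.
Import GRing.Theory.
Local Open Scope ring_scope.

(* [is_M p q m M] : M is the least positive integer with
   M = - m * q^{-1} (mod p), the congruence being stated in the prime field 'F_p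
   (where q%:R is invertible since p is a prime with q < p). *)
Definition is_M (p q m M : nat) : Prop :=
  [/\ (0 < M)%N,
      (M%:R : 'F_p) = - (m%:R) / (q%:R)
    & forall k : nat, (0 < k)%N -> (k%:R : 'F_p) = - (m%:R) / (q%:R) -> (M <= k)%N].

(* Main.v *)
Require Import Defs.
From mathcomp Require Import all_boot all_order all_algebra.
From mathcomp Require Import zify.

Lemma gen (R : fieldType) (p q m M : nat) : p \in [pchar R]%R -> (q < p)%N -> (0 < m < q)%N ->
  (0 < M)%N -> (M%:R : R)%R = (- (m%:R) / (q%:R))%R ->
  (forall k : nat, (0 < k)%N -> (k%:R : R)%R = (- (m%:R) / (q%:R))%R -> (M <= k)%N) -> (M < p)%N.
Proof.
move=> chp qp /andP[m0 mq] M0 HM Hmin.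
have pp := GRing.pcharf_prime chp.
have p0 : (p%:R : R)%R = 0%R by apply/eqP; rewrite -(GRing.dvdn_pcharf chp).
have [H|H|H] := ltngtP M p; first by [].
- have hk : 0 < M - p by rewrite subn_gt0.
  have := Hmin (M - p) hk.
  have e : ((M - p)%:R : R)%R = (M%:R)%R.
    by rewrite GRing.natrB ?(ltnW H) // p0 GRing.subr0.
  rewrite e => /(_ HM).
  have pg := prime_gt0 pp.
  by rewrite leqNgt ltn_subrL pg M0.
- exfalso. subst M. move: HM. rewrite p0.
  have qne : (q%:R : R)%R != 0%R.
    rewrite -(GRing.dvdn_pcharf chp); apply/negP => /(dvdn_leq (ltn_trans m0 mq)).
    by rewrite leqNgt qp.
  move=> /esym /eqP. rewrite GRing.mulf_eq0 GRing.invr_eq0 (negbTE qne) orbF GRing.oppr_eq0.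
  rewrite -(GRing.dvdn_pcharf chp) => /(dvdn_leq m0).
  by rewrite leqNgt (ltn_trans mq qp).
Qed.

Lemma M_lt_p (p q m M : nat) : prime p -> q < p -> 0 < m < q ->
  is_M p q m M -> 0 < M < p.
Proof.
move=> pp qp hm [M0 HM Hmin].
rewrite M0 /=.
apply: (@gen 'F_p p q m M (pchar_Fp pp) qp hm M0) => //.
Qed.

Lemma suf_mono (F : nat -> nat) a b c : a <= b ->
  \sum_(b <= j < c) F j <= \sum_(a <= j < c) F j.
Proof.
move=> hab; case: (leqP b c) => hbc.
  by rewrite (big_cat_nat hab hbc) /= leq_addl.
by rewrite big_geq // ltnW.
Qed.

Lemma sum_bnd (F : nat -> nat) a b K : (forall j, a <= j < b -> F j <= K) ->
  \sum_(a <= j < b) F j <= (b - a) * K.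
Proof.
move=> H; rewrite -sum_nat_const_nat big_nat_cond [X in _ <= X]big_nat_cond.
by apply: leq_sum => j /andP[/H h _].
Qed.

Theorem corollary6p4 (p q n : nat) (m M : nat -> nat) :
  prime p -> prime q -> 0 < n -> 2 <= n -> n < p -> q < p ->
  (forall j, 1 <= j <= n -> 0 < m j < q) ->
  (forall j, 1 <= j <= n -> is_M p q (m j) (M j)) ->
  (\sum_(1 <= j < n.+1) M j) %/ p = n.-1 ->
  forall l, 1 <= l <= n.-1 ->
    forall i, 0 < i ->
      ((l * p <= \sum_(i <= j < n.+1) M j < l * p + M i) <-> i = n - l).
Proof.
move=> pp _ n0 n2 np qp Hm HM Hdiv l /andP[l1 ln] i i0.
have HMb : forall j, 1 <= j <= n -> 0 < M j < p.
  by move=> j hj; exact: (@M_lt_p p q (m j) (M j) pp qp (Hm j hj) (HM j hj)).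
set T := fun i => \sum_(i <= j < n.+1) M j.
have TS : forall k, k <= n -> T k = M k + T k.+1.
  by move=> k hk; rewrite /T big_ltn // ltnS.
have Slow : n.-1 * p <= \sum_(1 <= j < n.+1) M j.
  by rewrite -Hdiv leq_trunc_div.
clear Hdiv Hm HM.
have [k0 ek0] : {k0 | k0 = n - l} by exists (n - l).
have hi0 : 1 <= k0 < n by lia.
have T0 : l * p <= T k0.
  have e : \sum_(1 <= j < n.+1) M j = \sum_(1 <= j < k0) M j + T k0.
    by rewrite /T -big_cat_nat //; lia.
  have b : \sum_(1 <= j < k0) M j <= (k0 - 1) * p.-1.
    apply: sum_bnd => j hj. have := HMb j. lia.
  have c : (k0 - 1) * p.-1 <= (k0 - 1) * p by exact: leq_mul (leqnn _) (leq_pred _).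
  have e2 : n.-1 * p = l * p + (k0 - 1) * p.
    by rewrite -mulnDl; congr (_ * _); lia.
  move: Slow c b; rewrite e e2.
  move: (l * p) ((k0 - 1) * p) ((k0 - 1) * p.-1) (T k0) (\sum_(1 <= j < k0) M j).
  move=> a1 a2 a3 a4 a5; lia.
have T1 : T k0.+1 < l * p.
  have b : T k0.+1 <= (n.+1 - k0.+1) * p.-1.
    apply: sum_bnd => j hj. have := HMb j. lia.
  have pg := prime_gt0 pp.
  have e3 : n.+1 - k0.+1 = l by lia.
  rewrite e3 in b.
  have : l * p.-1 < l * p by rewrite ltn_pmul2l; lia.
  move: b; move: (l * p.-1) (l * p) (T k0.+1) => a1 a2 a3; lia.
rewrite -ek0 -/(T i); split.
- move=> /andP[h1 h2].
  case: (ltngtP i k0) => [hi|hi|] //; exfalso.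
  + have e := TS i (ltnW (leq_trans hi (ltnW (proj2 (andP hi0))))).
    have : T k0 <= T i.+1 by apply: suf_mono.
    lia.
  + have : T i <= T k0.+1 by apply: suf_mono.
    lia.
- move=> ->. rewrite T0 /=. rewrite (TS k0); last lia. lia.
Qed.
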